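(* Let $\psi:\mathbb{R}^n\to\mathbb{R}^n$ be a contraction and $\varepsilon\ge0$. If $x,x'\in\mathbb{R}^n$ are such that $L=\|\psi(x)-\psi(x')\|$ satisfies $\|x-x'\|\le L+\varepsilon$, then for all $0\le t\le1$, $$\|\psi((1-t)x+tx')-((1-t)\psi(x)+t\psi(x'))\|\le\sqrt{\varepsilon(2L+\varepsilon)}.$$
   Context: A contraction is a map with Lipschitz constant $1$ with respect to the Euclidean norm. *)

(* Defs.v *)
From mathcomp Require Import all_boot all_order all_algebra.
From mathcomp Require Import reals.
Set Implicit Arguments. Unset Strict Implicit. Unset Printing Implicit Defensive.
Import Order.TTheory GRing.Theory Num.Theory.
Local Open Scope ring_scope.

Definition enorm (R : realType) (n : nat) (v : 'rV[R]_n) : R :=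
  Num.sqrt (\sum_(i < n) v ord0 i ^+ 2).

Definition contraction (R : realType) (n : nat) (psi : 'rV[R]_n -> 'rV[R]_n) : Prop :=
  forall x y : 'rV[R]_n, enorm (psi x - psi y) <= enorm (x - y).

(* Main.v *)
Require Import Defs.
From mathcomp Require Import all_boot all_order all_algebra.
From mathcomp Require Import reals.
From mathcomp Require Import ring lra.
Set Implicit Arguments. Unset Strict Implicit.
Import Order.TTheory GRing.Theory Num.Theory.
Local Open Scope ring_scope.

Definition sq (R : realType) (n : nat) (v : 'rV[R]_n) : R :=
  \sum_(i < n) v ord0 i ^+ 2.

Lemma sq_ge0 (R : realType) (n : nat) (v : 'rV[R]_n) : 0 <= sq v.
Proof. by apply: sumr_ge0 => i _; rewrite sqr_ge0. Qed.

Lemma enorm_sq (R : realType) (n : nat) (v : 'rV[R]_n) : enorm v ^+ 2 = sq v.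
Proof. by rewrite /enorm sqr_sqrtr // sq_ge0. Qed.

Lemma enorm_le (R : realType) (n : nat) (u v : 'rV[R]_n) :
  enorm u <= enorm v -> sq u <= sq v.
Proof. by rewrite /enorm ler_sqrt // sq_ge0. Qed.

Theorem lemma7p4 (R : realType) (n : nat) (psi : 'rV[R]_n -> 'rV[R]_n)
  (eps : R) (x x' : 'rV[R]_n) :
  contraction psi -> 0 <= eps ->
  enorm (x - x') <= enorm (psi x - psi x') + eps ->
  forall t : R, 0 <= t -> t <= 1 ->
    enorm (psi ((1 - t) *: x + t *: x') - ((1 - t) *: psi x + t *: psi x'))
    <= Num.sqrt (eps * (2 * enorm (psi x - psi x') + eps)).
Proof.
move=> hc he hD t t0 t1.
set y := (1 - t) *: x + t *: x'.
set a := psi x; set b := psi x'; set z := psi y.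
set D := enorm (x - x'); set L := enorm (psi x - psi x').
have hza : sq (z - a) <= sq (y - x) by apply: enorm_le; apply: hc.
have hzb : sq (z - b) <= sq (y - x') by apply: enorm_le; apply: hc.
have e1 : sq (y - x) = t ^+ 2 * sq (x - x').
  rewrite /sq mulr_sumr; apply: eq_bigr => i _; rewrite !mxE; ring.
have e2 : sq (y - x') = (1 - t) ^+ 2 * sq (x - x').
  rewrite /sq mulr_sumr; apply: eq_bigr => i _; rewrite !mxE; ring.
have e3 : sq (z - ((1 - t) *: a + t *: b)) =
   (1 - t) * sq (z - a) + t * sq (z - b) - t * (1 - t) * sq (a - b).
  rewrite /sq !mulr_sumr -!big_split /= -sumrN -big_split /=.
  apply: eq_bigr => i _; rewrite !mxE; ring.
have P : sq (x - x') = D ^+ 2 by rewrite enorm_sq.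
have Q : sq (a - b) = L ^+ 2 by rewrite enorm_sq.
have D0 : 0 <= D by rewrite /D /enorm sqrtr_ge0.
have L0 : 0 <= L by rewrite /L /enorm sqrtr_ge0.
rewrite /enorm ler_wsqrtr // -/(sq _) e3 Q.
rewrite e1 P in hza; rewrite e2 P in hzb.
have hD2 : D ^+ 2 <= (L + eps) ^+ 2 by rewrite ler_sqr // ?nnegrE; lra.
have h1t : 0 <= 1 - t by lra.
have ha := ler_wpM2l h1t hza.
have hb := ler_wpM2l t0 hzb.
have htt : 0 <= t * (1 - t) by apply: mulr_ge0.
have key : t * (1 - t) * (D ^+ 2 - L ^+ 2) <= eps * (2 * L + eps).
  have hr : eps * (2 * L + eps) = (L + eps) ^+ 2 - L ^+ 2 by ring.
  have hr0 : 0 <= eps * (2 * L + eps) by apply: mulr_ge0 => //; lra.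
  case: (lerP (D ^+ 2) (L ^+ 2)) => hDL.
    apply: le_trans hr0; rewrite mulr_ge0_le0 //; lra.
  apply: (@le_trans _ _ (D ^+ 2 - L ^+ 2)); last lra.
  have ht : t * (1 - t) <= 1.
    have h := ler_wpM2l t0 (_ : 1 - t <= 1); rewrite mulr1 in h.
    apply: le_trans (h _) t1; lra.
  rewrite -[X in _ <= X]mul1r ler_wpM2r //; lra.
have eq4 : (1 - t) * (t ^+ 2 * D ^+ 2) + t * ((1 - t) ^+ 2 * D ^+ 2)
   - t * (1 - t) * L ^+ 2 = t * (1 - t) * (D ^+ 2 - L ^+ 2) by ring.
lra.
Qed.
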